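(* Let $(X,d)$ be a compact metric space and let $f:X\to X$ be an arbitrary map (no continuity assumed). If $(x_k)_{k\in\mathbb{N}}$ is a sequence in $CR_f$ such that $x_k\,\mathcal{C}\,x_{k+1}$ for every $k$, then there exists $y\in CR_f$ such that $x_k\,\mathcal{C}\,y$ for every $k\in\mathbb{N}$.
   Context: For a metric space $(X,d)$ and map $f:X\to X$: an $\varepsilon$-chain from $x$ to $y$ is a finite sequence $x_0=x,\dots,x_n=y$, $n\ge1$, with $d(f(x_i),x_{i+1})<\varepsilon$ for all $i$; $x\,\mathcal{C}\,y$ iff for every $\varepsilon>0$ there is an $\varepsilon$-chain from $x$ to $y$; $CR_f=\{x\in X:x\,\mathcal{C}\,x\}$. *)

(* Defs.v *)
From HB Require Import structures.
From mathcomp Require Import all_boot all_order all_algebra.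
From mathcomp Require Import all_classical all_reals all_analysis.
Set Implicit Arguments. Unset Strict Implicit. Unset Printing Implicit Defensive.
Import Order.TTheory GRing.Theory Num.Theory.
Local Open Scope ring_scope.

Definition eps_chain {R : realType} {X : metricType R} (f : X -> X)
    (eps : R) (x y : X) : Prop :=
  exists (n : nat) (s : nat -> X),
    (0 < n)%N /\ s 0%N = x /\ s n = y /\
    forall i : nat, (i < n)%N -> mdist (f (s i)) (s i.+1) < eps.

Definition chain_rel {R : realType} {X : metricType R} (f : X -> X)
    (x y : X) : Prop :=
  forall eps : R, 0 < eps -> eps_chain f eps x y.

Definition chain_recurrent {R : realType} {X : metricType R} (f : X -> X)
    : set X := [set x | chain_rel f x x].

(* Main.v *)
Require Import Defs.
From HB Require Import structures.
From mathcomp Require Import all_boot all_order all_algebra.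
From mathcomp Require Import all_classical all_reals all_analysis.
Import Order.TTheory GRing.Theory Num.Theory.
Local Open Scope classical_set_scope.
Local Open Scope ring_scope.

Section Aux.
Context (R : realType) (X : metricType R) (f : X -> X).

Lemma chain_trans a b c : chain_rel f a b -> chain_rel f b c -> chain_rel f a c.
Proof.
move=> hab hbc eps e0.
have [n [s [n0 [s0 [sn hs]]]]] := hab eps e0.
have [m [t [m0 [t0 [tm ht]]]]] := hbc eps e0.
exists (n + m)%N, (fun i => if (i <= n)%N then s i else t (i - n)%N).
split; first by rewrite addn_gt0 n0.
split; first by rewrite leq0n.
split; first by rewrite leqNgt -{1}(addn0 n) ltn_add2l m0 /= addKn.
move=> i lti.
case: (ltnP i n) => hin.
  by rewrite /= (ltnW hin); apply: hs.
have -> : (if (i <= n)%N then s i else t (i - n)%N) = t (i - n)%N.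
  case: ifP => // hin'.
  have -> : i = n by apply/eqP; rewrite eqn_leq hin' hin.
  by rewrite subnn sn t0.
rewrite subSn //; apply: ht.
by rewrite ltn_subLR // addnC.
Qed.

Lemma chain_f z : chain_rel f z (f z).
Proof.
move=> eps e0; exists 1%N, (fun i => if i is 0%N then z else f z).
do 3!split => //.
by move=> i; rewrite ltnS leqn0 => /eqP -> /=; rewrite mdistxx.
Qed.

Lemma chain_close z p :
  (forall eps, 0 < eps -> exists v, chain_rel f z v /\ mdist p v < eps) ->
  chain_rel f z p.
Proof.
move=> h eps e0.
have e20 : 0 < eps / 2 by rewrite divr_gt0.
have [v [hv dv]] := h _ e20.
have [n [s [n0 [s0 [sn hs]]]]] := hv _ e20.
exists n, (fun i => if i == n then p else s i).
split => //; split; first by rewrite eq_sym (negbTE (lt0n_neq0 n0)).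
split; first by rewrite eqxx.
move=> i lti; rewrite (ltn_eqF lti).
case: eqP => [hi|_]; last first.
  by apply: lt_trans (hs _ lti) _; rewrite ltr_pdivrMr // ltr_pMr // ltr1n.
apply: le_lt_trans (@metric_triangle _ _ _ (s n) _) _.
rewrite (splitr eps) ltrD //; first by rewrite -hi; apply: hs.
by rewrite sn metric_sym.
Qed.

Lemma cluster_total (hX : compact [set: X]) (D : set X) :
  D !=set0 ->
  (forall z1 z2, D z1 -> D z2 ->
     chain_rel f z1 `<=` chain_rel f z2 \/ chain_rel f z2 `<=` chain_rel f z1) ->
  exists p, forall z, D z -> chain_rel f z p.
Proof.
move=> [z0 Dz0] tot.
have FF : Filter (filter_from D (chain_rel f)).
  apply: filter_from_filter; first by exists z0.
  move=> i j Di Dj; case: (tot i j Di Dj) => h; [exists i | exists j] => //;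
    move=> w hw; split => //; exact: h.
have PF : ProperFilter (filter_from D (chain_rel f)).
  by apply: filter_from_proper => i _; exists (f i); exact: chain_f.
have [p [_ cp]] := hX _ PF filterT.
exists p => z Dz; apply: chain_close => eps e0.
have : (chain_rel f z `&` ball p eps) !=set0.
  by apply: cp; [exists z | exact: nbhsx_ballx].
by case => v [hv bv]; exists v; split => //; move: bv; rewrite ballEmdist.
Qed.

End Aux.

Theorem lemma3p5 (R : realType) (X : metricType R) (f : X -> X)
    (hX : compact [set: X]) (x : nat -> X)
    (hCR : forall k : nat, chain_recurrent f (x k))
    (hC : forall k : nat, chain_rel f (x k) (x k.+1)) :
  exists y : X, chain_recurrent f y /\ forall k : nat, chain_rel f (x k) y.
Proof.
pose Pz z := forall k, chain_rel f (x k) z.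
have mono k m : (k <= m)%N -> chain_rel f (x m) `<=` chain_rel f (x k).
  elim: m => [|m IH]; first by rewrite leqn0 => /eqP ->.
  rewrite leq_eqVlt => /orP [/eqP -> //|]; rewrite ltnS => /IH h w hw.
  by apply: h; apply: chain_trans (hC m) hw.
have [w0 hw0] : exists w0, Pz w0.
  have [p hp] : exists p, forall z, range x z -> chain_rel f z p; last first.
    by exists p => k; apply: hp; exists k.
  apply: (@cluster_total R X f hX); first by exists (x 0%N), 0%N.
  move=> _ _ [k _ <-] [m _ <-]; case: (leqP k m) => h.
    by right; apply: mono.
  by left; apply: mono; apply: ltnW.
pose T := {A : set X | exists z, Pz z /\ A = chain_rel f z}.
pose Rl (A B : T) := `[< sval B `<=` sval A >].
have [t0 t0max] : exists t, forall s, Rl t s -> s = t.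
  apply: (@Zorn T Rl).
  - by move=> A; apply/asboolP.
  - move=> A B C /asboolP h1 /asboolP h2; apply/asboolP => w hw.
    exact/h1/h2.
  - case=> a pa [b pb] /asboolP /= h1 /asboolP /= h2.
    have eab : a = b by apply/seteqP; split.
    subst b; by rewrite (Prop_irrelevance pa pb).
  - move=> Ach tot.
    case: (pselect (Ach !=set0)) => [[s0 As0]|Ach0]; last first.
      exists (exist _ (chain_rel f w0) (ex_intro _ w0 (conj hw0 erefl))).
      by move=> s As; exfalso; apply: Ach0; exists s.
    pose D := [set z | Pz z /\ exists s, Ach s /\ sval s = chain_rel f z].
    have [p hp] : exists p, forall z, D z -> chain_rel f z p.
      apply: (@cluster_total R X f hX D).
        move: As0; case: s0 => a [z [Pzz az]] As0.
        by exists z; split => //; exists (exist _ a (ex_intro _ z (conj Pzz az))).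
      move=> z1 z2 [_ [s1 [As1 e1]]] [_ [s2 [As2 e2]]].
      case: (tot s1 s2 As1 As2) => /asboolP h; rewrite -e1 -e2; [right|left]; exact: h.
    have Pzp : Pz p.
      move: As0; case: s0 => a [z [Pzz az]] As0 k.
      apply: chain_trans (Pzz k) _; apply: hp; split => //.
      by exists (exist _ a (ex_intro _ z (conj Pzz az))).
    exists (exist _ (chain_rel f p) (ex_intro _ p (conj Pzp erefl))).
    move=> s As; apply/asboolP => /= w hw.
    move: As; case: s => a [z [Pzz az]] As /=.
    rewrite az; apply: (chain_trans R X f z p w _ hw); apply: hp; split => //.
    by exists (exist _ a (ex_intro _ z (conj Pzz az))).
move: t0max; case: t0 => a [z [Pzz az]] t0max.
have Pzf : Pz (f z) by move=> k; apply: chain_trans (Pzz k) (chain_f R X f z).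
have hR : Rl (exist _ a (ex_intro _ z (conj Pzz az)))
    (exist _ (chain_rel f (f z)) (ex_intro _ (f z) (conj Pzf erefl))).
  apply/asboolP => /= w hw; rewrite az.
  exact: (chain_trans R X f z (f z) w (chain_f R X f z) hw).
have /(congr1 sval) /= e := t0max _ hR.
exists (f z); split => //.
rewrite /chain_recurrent /= e az; exact: chain_f.
Qed.
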